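(* Let $(B,G)$ be an admissible pair with $B\in M_{Q_0}(\mathbb Z)$, let $(A,\mathbf x)$ be a $G$-invariant seed in $\mathcal A(B)$ and let $\Omega$ be a $G$-orbit in $Q_0$. Let $(A^{(n)},\mathbf x^{(n)})=\mu^G_\Omega(A,\mathbf x)$, with $A^{(n)}=(a^{(n)}_{ij})$ and $\mathbf x^{(n)}=(x^{(n)}_i)_{i\in Q_0}$. Then $G$ is an automorphism group of $A^{(n)}$, and for all $i\in Q_0$ and $g\in G$: $$a^{(n)}_{i,gi}=0\quad\text{and}\quad x^{(n)}_{gi}=g\,x^{(n)}_i.$$
   Context: $Q_0$ finite; matrices are skew-symmetrizable ($DB$ skew-symmetric for a positive integer diagonal $D$). Mutation of matrices: $\mu_k(M)=(m'_{ij})$ with $m'_{ij}=-m_{ij}$ if $k\in\{i,j\}$, else $m_{ij}+\tfrac12(|m_{ik}|m_{kj}+m_{ik}|m_{kj}|)$; of seeds: $\mu_k(M,\mathbf y)=(\mu_k(M),\mathbf y')$ with $y'_i=y_i$ ($i\ne k$) and $y_ky'_k=\prod_{m_{ik}>0}y_i^{m_{ik}}+\prod_{m_{ik}<0}y_i^{-m_{ik}}$. $\mathcal A(B)=\mathcal A(B,\mathbf u)$ is the cluster algebra with initial seed $(B,\mathbf u)$, $\mathbf u=(u_i)_{i\in Q_0}$; its seeds are those obtained by finite sequences of mutations. A permutation $g$ of $Q_0$ is an automorphism of $S=(s_{ij})$ if $s_{gi,gj}=s_{ij}$ for all $i,j$; a group $G$ of automorphisms is admissible ($(S,G)$ an admissible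 pair) if for distinct $i,j$ in the same $G$-orbit there is no path of length $1$ or $2$ from $i$ to $j$ in the quiver of $S$ ($s_{ij}\le0$ and no $k$ with $s_{ik}>0$, $s_{kj}>0$). $G$ acts on $\mathbb Z[\mathbf u^{\pm1}]$ by $gu_i=u_{gi}$. A seed $(S,\mathbf x)$ is $G$-invariant if $gx_i=x_{gi}$ for all $g,i$ and $(S,G)$ is an admissible pair. The orbit mutation is $\mu^G_\Omega=\prod_{j\in\Omega}\mu_j$ (mutation at all elements of $\Omega$, order irrelevant). *)

(* Defs.v *)
From HB Require Import structures.
From mathcomp Require Import all_boot all_order all_algebra all_fingroup.
From mathcomp Require Import fraction generic_quotient.
From mathcomp Require Import mpoly.
Set Implicit Arguments. Unset Strict Implicit. Unset Printing Implicit Defensive.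
Import Order.TTheory GRing.Theory Num.Theory.
Local Open Scope ring_scope.

(* Q_0 = 'I_n.  Matrices over Z are 'M[int]_n. *)

Definition skew_symmetrizable (n : nat) (B : 'M[int]_n) : Prop :=
  exists d : 'I_n -> int, (forall i, 0 < d i) /\
    (forall i j, d i * B i j = - (d j * B j i)).

Definition mut_mx (n : nat) (k : 'I_n) (M : 'M[int]_n) : 'M[int]_n :=
  \matrix_(i, j)
    if (i == k) || (j == k) then - M i j
    else M i j + ((`|M i k| * M k j + M i k * `|M k j|) %/ 2)%Z.

(* ambient field: rational functions in the initial cluster u_i = 'X_i,
   i.e. the fraction field of Z[u_i : i in Q_0] *)
Definition ambient (n : nat) := {fraction {mpoly int[n]}}.

Definition init_cluster (n : nat) : 'I_n -> ambient n :=
  fun i => tofrac ('X_i : {mpoly int[n]}).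

Definition seed (n : nat) := ('M[int]_n * ('I_n -> ambient n))%type.

Definition mut_seed (n : nat) (k : 'I_n) (S : seed n) : seed n :=
  let M := S.1 in let y := S.2 in
  (mut_mx k M,
   fun i => if i == k then
       (\prod_(l | 0 < M l k) y l ^+ absz (M l k)
        + \prod_(l | M l k < 0) y l ^+ absz (M l k)) / y k
     else y i).

(* mutation along a sequence of directions (applied left to right) *)
Definition mut_seq (n : nat) (s : seq 'I_n) (S : seed n) : seed n :=
  foldl (fun S' k => mut_seed k S') S s.

Definition seed_of_cluster_algebra (n : nat) (B : 'M[int]_n) (S : seed n) : Prop :=
  exists s : seq 'I_n, mut_seq s (B, @init_cluster n) = S.

Definition is_mx_aut (n : nat) (S : 'M[int]_n) (g : {perm 'I_n}) : Prop :=
  forall i j, S (g i) (g j) = S i j.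

Definition admissible (n : nat) (S : 'M[int]_n) (G : {group {perm 'I_n}}) : Prop :=
  (forall g, g \in G -> is_mx_aut S g) /\
  (forall (i : 'I_n) (g : {perm 'I_n}), g \in G -> g i != i ->
     S i (g i) <= 0 /\ ~ (exists k, 0 < S i k /\ 0 < S k (g i))).

(* action of a permutation g on Z[u^{+-1}] (and its fraction field):
   the ring automorphism with u_i |-> u_{g i}, applied to numerator and
   denominator of a representative *)
Definition perm_act (n : nat) (g : {perm 'I_n}) (x : ambient n) : ambient n :=
  let r := frac (repr x) in
  tofrac (msym g r.1) / tofrac (msym g r.2).

Definition G_invariant (n : nat) (G : {group {perm 'I_n}}) (S : seed n) : Prop :=
  (forall g i, g \in G -> perm_act g (S.2 i) = S.2 (g i)) /\ admissible S.1 G.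

(* orbit mutation mu^G_Omega = product of mu_j, j in Omega (in the order
   of enum Omega; the order is irrelevant by admissibility) *)
Definition orbit_mut (n : nat) (Omega : {set 'I_n}) (S : seed n) : seed n :=
  mut_seq (enum Omega) S.

(* Main.v *)
Require Import Defs.
From HB Require Import structures.
From mathcomp Require Import all_boot all_order all_algebra all_fingroup.
From mathcomp Require Import fraction generic_quotient.
From mathcomp Require Import mpoly.
From mathcomp Require Import zify ring.
From Stdlib Require Import FunctionalExtensionality.
Set Implicit Arguments. Unset Strict Implicit. Unset Printing Implicit Defensive.
Import Order.TTheory GRing.Theory Num.Theory.
Local Open Scope ring_scope.

Lemma frac_repr (R : idomainType) (x : {fraction R}) :
  x = tofrac (frac (repr x)).1 / tofrac (frac (repr x)).2.
Proof.
have nz := denom_ratioP (repr x).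
apply: (@mulIf _ (tofrac (frac (repr x)).2)); first by rewrite tofrac_eq0.
rewrite mulfVK ?tofrac_eq0 //.
rewrite -{1}[x]reprK.
unlock tofrac.
rewrite -[X in X = _]FracField.pi_mul.
apply/eqmodP; rewrite /= FracField.equivfE /FracField.mulf /= !numden_Ratio ?oner_neq0 ?mulf_neq0 //.
- by rewrite !mulr1 mulrC.
all: try exact: oner_neq0.
all: try exact: mulf_neq0.
Qed.

Section PermAct.
Variables (n : nat) (g : {perm 'I_n}).
Local Notation F := (ambient n).
Local Notation sg := (@msym n int g).

Lemma sg_neq0 (p : {mpoly int[n]}) : p != 0 -> sg p != 0.
Proof. apply: contra => /eqP h; apply/eqP; apply: (@inj_msym _ _ g); by rewrite h msym0. Qed.

Lemma div_eq (K : fieldType) (a b c d : K) : b != 0 -> d != 0 ->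
  a * d = c * b -> a / b = c / d.
Proof.
by move=> hb hd e; apply/eqP; rewrite eqr_div // e.
Qed.

Lemma perm_act0 : perm_act g 0 = 0.
Proof.
rewrite /perm_act.
have hx := frac_repr (0 : F).
have nz := denom_ratioP (repr (0 : F)).
have tnz : tofrac (frac (repr (0 : F))).2 != 0 by rewrite tofrac_eq0.
move: hx => /esym /eqP; rewrite mulf_eq0 invr_eq0 (negbTE tnz) orbF.
rewrite tofrac_eq0 => /eqP ->; by rewrite !msym0 tofrac0 !mul0r.
Qed.

Lemma key_frac (r1 r2 a b : {mpoly int[n]}) : r2 != 0 -> b != 0 ->
  tofrac r1 / tofrac r2 = tofrac a / tofrac b ->
  tofrac (sg r1) / tofrac (sg r2) = tofrac (sg a) / tofrac (sg b).
Proof.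
move=> h2 hb /eqP; rewrite eqr_div ?tofrac_eq0 // -!tofracM tofrac_eq => /eqP e.
apply/eqP; rewrite eqr_div ?tofrac_eq0 ?sg_neq0 // -!tofracM tofrac_eq -!msymM.
by rewrite e.
Qed.

Lemma perm_act_frac (a b : {mpoly int[n]}) : perm_act g (tofrac a / tofrac b) = tofrac (sg a) / tofrac (sg b).
Proof.
have [->|hb] := eqVneq b 0.
  by rewrite msym0 !tofrac0 !invr0 !mulr0 perm_act0.
rewrite /perm_act.
exact: (key_frac (denom_ratioP _) hb (esym (frac_repr _))).
Qed.

Lemma perm_act_tofrac (a : {mpoly int[n]}) : perm_act g (tofrac a) = tofrac (sg a).
Proof. by rewrite -[tofrac a]divr1 -tofrac1 perm_act_frac msym1 tofrac1 !divr1. Qed.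

Lemma perm_act1 : perm_act g 1 = 1.
Proof. by rewrite -tofrac1 perm_act_tofrac msym1. Qed.

Lemma perm_actM (u v : F) : perm_act g (u * v) = perm_act g u * perm_act g v.
Proof.
rewrite [u]frac_repr [v]frac_repr.
set a := (frac (repr u)).1; set b := (frac (repr u)).2.
set c := (frac (repr v)).1; set d := (frac (repr v)).2.
rewrite mulf_div -!tofracM !perm_act_frac !msymM !tofracM.
by rewrite mulf_div.
Qed.

Lemma perm_actD (u v : F) : perm_act g (u + v) = perm_act g u + perm_act g v.
Proof.
rewrite [u]frac_repr [v]frac_repr.
have nb := denom_ratioP (repr u); have nd := denom_ratioP (repr v).
set a := (frac (repr u)).1; set b := (frac (repr u)).2.
set c := (frac (repr v)).1; set d := (frac (repr v)).2.
rewrite addf_div ?tofrac_eq0 // -!tofracM -tofracD !perm_act_frac !msymD !msymM.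
by rewrite addf_div ?tofrac_eq0 ?sg_neq0 // !tofracM tofracD !tofracM.
Qed.

Lemma perm_actV (u : F) : perm_act g u^-1 = (perm_act g u)^-1.
Proof.
rewrite [u]frac_repr.
set a := (frac (repr u)).1; set b := (frac (repr u)).2.
by rewrite invf_div !perm_act_frac invf_div.
Qed.

Lemma perm_actX (u : F) k : perm_act g (u ^+ k) = (perm_act g u) ^+ k.
Proof.
elim: k => [|k IH]; first by rewrite !expr0 perm_act1.
by rewrite !exprS perm_actM IH.
Qed.

Lemma perm_act_prod (P : pred 'I_n) (f : 'I_n -> F) :
  perm_act g (\prod_(l | P l) f l) = \prod_(l | P l) perm_act g (f l).
Proof. exact: (big_morph _ perm_actM perm_act1). Qed.

End PermAct.

Definition term (a b : int) : int := ((`|a| * b + a * `|b|) %/ 2)%Z.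
Lemma term2 a b : term a b * 2 = `|a| * b + a * `|b|.
Proof. rewrite /term. case: (lerP 0 a) => ha; case: (lerP 0 b) => hb; rewrite ?(ger0_norm ha) ?(ltr0_norm ha) ?(ger0_norm hb) ?(ltr0_norm hb); nia. Qed.
Lemma termE (a b : int) : ((`|a| * b + a * `|b|) %/ 2)%Z = term a b.
Proof. by []. Qed.
Lemma term0l b : term 0 b = 0. Proof. by rewrite /term normr0 !mul0r addr0. Qed.
Lemma term0r b : term b 0 = 0. Proof. by rewrite /term normr0 !mulr0 addr0. Qed.
Lemma term_zero a b : ~~ ((0 < a) && (0 < b)) -> ~~ ((a < 0) && (b < 0)) -> term a b = 0.
Proof.
move=> h1 h2; have t := term2 a b.
case: (lerP 0 a) h1 h2 t => ha; case: (lerP 0 b) => hb;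
  rewrite ?(ger0_norm ha) ?(ltr0_norm ha) ?(ger0_norm hb) ?(ltr0_norm hb) /=; nia.
Qed.
Lemma term_skew (di dj dk a1 a2 b1 b2 : int) : 0 < di -> 0 < dj -> 0 < dk ->
  di * a1 = - (dk * a2) -> dk * b1 = - (dj * b2) ->
  di * term a1 b1 = - (dj * term b2 a2).
Proof.
move=> hi hj hk h1 h2.
have e1 : di * `|a1| = dk * `|a2|.
  by rewrite -(gtr0_norm hi) -(gtr0_norm hk) -!normrM h1 normrN.
have e2 : dk * `|b1| = dj * `|b2|.
  by rewrite -(gtr0_norm hj) -(gtr0_norm hk) -!normrM h2 normrN.
have t1 := term2 a1 b1; have t2 := term2 b2 a2.
have : dk * (di * term a1 b1 * 2) = dk * (- (dj * term b2 a2) * 2).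
  rewrite mulNr -!mulrA t1 t2.
  have -> : dk * (di * (`|a1| * b1 + a1 * `|b1|)) = (di * `|a1|) * (dk * b1) + (di * a1) * (dk * `|b1|) by ring.
  rewrite e1 h2 h1 e2. ring.
move/(mulfI (lt0r_neq0 hk)) => /eqP; rewrite (inj_eq (mulIf _)) //; by move/eqP.
Qed.

Definition skewd n (d : 'I_n -> int) (M : 'M[int]_n) :=
  forall i j, d i * M i j = - (d j * M j i).

Lemma mut_skew n (d : 'I_n -> int) k M : (forall i, 0 < d i) -> skewd d M -> skewd d (mut_mx k M).
Proof.
move=> dp sk i j; rewrite !mxE [(j == k) || _]orbC; case: ifP => _.
  by rewrite !mulrN sk.
rewrite !mulrDr sk opprD; congr (_ + _).
exact: (term_skew (dp i) (dp j) (dp k) (sk i k) (sk k j)).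
Qed.

Lemma seq_skew n (d : 'I_n -> int) s (S : seed n) : (forall i, 0 < d i) -> skewd d S.1 ->
  skewd d (mut_seq s S).1.
Proof.
move=> dp; elim: s S => [|k s IH] S //= h.
by apply: IH; apply: mut_skew.
Qed.

Section Sim.
Variable n : nat.
Implicit Types (Om : {set 'I_n}) (M : 'M[int]_n) (y : 'I_n -> ambient n).

Definition simM Om M : 'M[int]_n := \matrix_(i, j)
  if (i \in Om) && (j \in Om) then M i j
  else if (i \in Om) || (j \in Om) then - M i j
  else M i j + \sum_(k in Om) term (M i k) (M k j).

Definition mutv M y i : ambient n :=
  (\prod_(l | 0 < M l i) y l ^+ absz (M l i)
   + \prod_(l | M l i < 0) y l ^+ absz (M l i)) / y i.

Definition simX Om M y : 'I_n -> ambient n :=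
  fun i => if i \in Om then mutv M y i else y i.

Definition zeroOn Om M := forall i j, i \in Om -> j \in Om -> M i j = 0.

Lemma col_same Om M k l : k \notin Om -> zeroOn (k |: Om) M -> simM Om M l k = M l k.
Proof.
move=> kO z; rewrite mxE (negbTE kO) andbF orbF.
case: ifP => lO.
  by rewrite (z l k) ?oppr0 // in_setU1 ?lO ?eqxx ?orbT.
rewrite big1 ?addr0 // => k' k'O.
by rewrite (z k' k) ?term0r // in_setU1 ?k'O ?eqxx ?orbT.
Qed.

Lemma row_same Om M k l : k \notin Om -> zeroOn (k |: Om) M -> simM Om M k l = M k l.
Proof.
move=> kO z; rewrite mxE (negbTE kO) /=.
case: ifP => lO.
  by rewrite (z k l) ?oppr0 // in_setU1 ?lO ?eqxx ?orbT.
rewrite big1 ?addr0 // => k' k'O.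
by rewrite (z k k') ?term0l // in_setU1 ?k'O ?eqxx ?orbT.
Qed.

Lemma step Om M y k : k \notin Om -> zeroOn (k |: Om) M ->
  mut_seed k (simM Om M, simX Om M y) = (simM (k |: Om) M, simX (k |: Om) M y).
Proof.
move=> kO z; rewrite /mut_seed /=; congr (_, _).
  apply/matrixP => i j; rewrite [LHS]mxE [RHS]mxE !in_setU1.
  have [ik|ik] := eqVneq i k; rewrite /=.
    subst i; rewrite row_same //.
    case: ifP => jO; first by rewrite (z k j) ?oppr0 // in_setU1 ?jO ?eqxx ?orbT.
    done.
  have [jk|jk] := eqVneq j k; rewrite /=.
    subst j; rewrite col_same // andbT orbT.
    case: ifP => iO; first by rewrite (z i k) ?oppr0 // in_setU1 ?iO ?eqxx ?orbT.
    done.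
  have zik : i \in Om -> M i k = 0.
    by move=> iO; rewrite (z i k) // in_setU1 ?iO ?eqxx ?orbT.
  have zkj : j \in Om -> M k j = 0.
    by move=> jO; rewrite (z k j) // in_setU1 ?jO ?eqxx ?orbT.
  rewrite termE (col_same i kO z) (row_same j kO z) mxE.
  case iO: (i \in Om); case jO: (j \in Om) => /=.
  - by rewrite zik // term0l addr0.
  - by rewrite zik // term0l addr0.
  - by rewrite zkj // term0r addr0.
  - by rewrite big_setU1 //=; ring.
apply: functional_extensionality => i; rewrite /simX in_setU1.
have [ik|ik] := eqVneq i k; rewrite /=.
  subst i; rewrite /mutv (negbTE kO).
  have e : forall l, (simM Om M) l k = M l k by move=> l; rewrite col_same.
  have ey : forall l, M l k != 0 -> (if l \in Om then mutv M y l else y l) = y l.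
    move=> l; case: ifP => // lO; rewrite (z l k) ?eqxx // in_setU1 ?lO ?eqxx ?orbT //.
  congr ((_ + _) / _).
    apply: eq_big => [l|l hl]; first by rewrite e.
    rewrite e ey //; move: hl; rewrite e; by case: ltrgt0P.
  apply: eq_big => [l|l hl]; first by rewrite e.
  rewrite e ey //; move: hl; rewrite e; by case: ltrgt0P.
by [].
Qed.

Lemma seq_sim (s : seq 'I_n) M y : uniq s -> zeroOn [set x in s] M ->
  mut_seq s (M, y) = (simM [set x in s] M, simX [set x in s] M y).
Proof.
elim/last_ind: s => [|s k IH].
  move=> _ _; rewrite /mut_seq /=; congr (_, _).
    by apply/matrixP => i j; rewrite mxE !inE /= big_pred0 ?addr0 // => k; rewrite inE.
  by apply: functional_extensionality => i; rewrite /simX inE.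
rewrite rcons_uniq => /andP [ks us] z.
have eS : [set x in rcons s k] = k |: [set x in s].
  by apply/setP => x; rewrite !inE mem_rcons in_cons.
have z' : zeroOn [set x in s] M.
  by move=> i j hi hj; apply: z; rewrite eS in_setU1 ?hi ?hj orbT.
have kS : k \notin [set x in s] by rewrite inE.
have z'' : zeroOn (k |: [set x in s]) M by rewrite -eS.
rewrite /mut_seq foldl_rcons -/(mut_seq s (M, y)) IH //.
by rewrite eS step.
Qed.

End Sim.

Theorem mainTheorem11 (n : nat) (B : 'M[int]_n) (G : {group {perm 'I_n}})
    (A : 'M[int]_n) (x : 'I_n -> ambient n) (Omega : {set 'I_n}) :
  skew_symmetrizable B ->
  admissible B G ->
  seed_of_cluster_algebra B (A, x) ->
  G_invariant G (A, x) ->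
  (exists i0 : 'I_n, Omega = [set (g : {perm 'I_n}) i0 | g in G]) ->
  let S' := orbit_mut Omega (A, x) in
  (forall g, g \in G -> is_mx_aut S'.1 g) /\
  (forall (i : 'I_n) (g : {perm 'I_n}), g \in G ->
     S'.1 i (g i) = 0 /\ S'.2 (g i) = perm_act g (S'.2 i)).
Proof.
move=> [d [dp skB]] _ [s hs] [ginv [autA admA]] [i0 hOm] S'.
rewrite /= in ginv autA admA.
have skA : skewd d A.
  by have := @seq_skew n d s (B, @init_cluster n) dp skB; rewrite hs.
have diagA : forall i, A i i = 0.
  move=> i; have h := skA i i; have hd := dp i.
  have : d i * A i i = 0 by lia.
  by move/eqP; rewrite mulf_eq0 (gt_eqF hd) => /eqP.
have zero_gi : forall i g, g \in G -> A i (g i) = 0.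
  move=> i g gG; have [e|ne] := eqVneq (g i) i; first by rewrite e diagA.
  have [h1 _] := admA i g gG ne.
  have giG : (g^-1)%g \in G by rewrite groupV.
  have ne' : (g^-1)%g (g i) != g i by rewrite permK eq_sym.
  have [h2 _] := admA (g i) (g^-1)%g giG ne'.
  rewrite permK in h2.
  have h := skA i (g i); have hd1 := dp i; have hd2 := dp (g i).
  nia.
have orbit_mem : forall g i, g \in G -> (g i \in Omega) = (i \in Omega).
  move=> g i gG; rewrite hOm; apply/idP/idP.
    case/imsetP => h hG e.
    have -> : i = (h * (g^-1)%g)%g i0 by rewrite permM -e permK.
    by apply: imset_f; rewrite groupM ?groupV.
  case/imsetP => h hG ->.
  rewrite -permM; by apply: imset_f; rewrite groupM.
have zOm : zeroOn Omega A.
  move=> i j; rewrite hOm => /imsetP [h hG ->] /imsetP [h' h'G ->].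
  have -> : h' i0 = (h^-1 * h')%g (h i0) by rewrite permM permK.
  by apply: zero_gi; rewrite groupM ?groupV.
have hS' : S' = (simM Omega A, simX Omega A x).
  rewrite /S' /orbit_mut seq_sim ?enum_uniq ?set_enum //.
rewrite hS' /=; split.
  move=> g gG i j; rewrite !mxE !orbit_mem // !autA //.
  case: ifP => // _; case: ifP => // _; congr (_ + _).
  rewrite (reindex_inj (@perm_inj _ g)) /=.
  apply: eq_big => [k|k _]; first by rewrite orbit_mem.
  by rewrite !autA.
move=> i g gG; split.
  rewrite mxE orbit_mem //.
  case iO: (i \in Omega) => /=; first exact: zero_gi.
  rewrite zero_gi // add0r big1 // => k _.
  have hd1 := dp i; have hdk := dp k; have hd2 := dp (g i).
  have s1 := skA i k; have s2 := skA k (g i).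
  have [e|ne] := eqVneq (g i) i.
    rewrite e; apply: term_zero; rewrite e in s2;
    apply/negP => /andP [p1 p2]; nia.
  have [_ hn1] := admA i g gG ne.
  have giG : (g^-1)%g \in G by rewrite groupV.
  have ne' : (g^-1)%g (g i) != g i by rewrite permK eq_sym.
  have [_ hn2] := admA (g i) (g^-1)%g giG ne'.
  rewrite permK in hn2.
  apply: term_zero; apply/negP => /andP [p1 p2].
    by apply: hn1; exists k.
  apply: hn2; exists k; split; nia.
rewrite /simX orbit_mem //.
case: ifP => _; last by rewrite ginv.
rewrite /mutv perm_actM perm_actV perm_actD !perm_act_prod ginv //.
congr ((_ + _) / _).
  rewrite (reindex_inj (@perm_inj _ g)) /=.
  apply: eq_big => [l|l _]; first by rewrite autA.
  by rewrite perm_actX ginv // autA.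
rewrite (reindex_inj (@perm_inj _ g)) /=.
apply: eq_big => [l|l _]; first by rewrite autA.
by rewrite perm_actX ginv // autA.
Qed.
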